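(* For every integer $n\ge4$, $$D_3(n)=2A(n-3)-2A(n-1)+2A(n).$$
   Context: $A(n)$ is the number of partitions of $n$ into distinct parts. $D_3(n)$ is the number of partitions of $n$ into non-negative parts (the part $0$ is allowed) in which the smallest part appears exactly $3$ times and no other part is repeated. *)

(* Defs.v *)
From mathcomp Require Import all_boot all_algebra.
Set Implicit Arguments. Unset Strict Implicit. Unset Printing Implicit Defensive.

Definition is_partition (n : nat) (s : seq nat) : bool :=
  sorted geq s && (sumn s == n).

Definition distinct_partition (n : nat) (s : seq nat) : bool :=
  [&& is_partition n s, all (fun x => 0 < x) s & uniq s].

(* Partitions of n into non-negative parts (0 allowed) in which the smallest
   part appears exactly 3 times and no other part is repeated. *)
Definition D3_partition (n : nat) (s : seq nat) : bool :=
  [&& is_partition n s, s != [::],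
      count_mem (last 0 s) s == 3
    & all (fun x => (x == last 0 s) || (count_mem x s == 1)) s].

Definition has_card (P : pred (seq nat)) (k : nat) : Prop :=
  exists l : seq (seq nat), [/\ uniq l, forall s, (s \in l) = P s & size l = k].

Definition A_card (n k : nat) : Prop := has_card (distinct_partition n) k.

Definition D3_card (n k : nat) : Prop := has_card (D3_partition n) k.

(* Main.v *)
Require Import Defs.
From mathcomp Require Import all_boot all_algebra zify ring.

Fixpoint E (k s m : nat) : seq (seq nat) :=
  match k with
  | 0 => if m == 0 then [:: [::]] else [::]
  | k'.+1 => E k' s.+1 m ++
      (if s.+1 <= m then map (cons s.+1) (E k' s.+1 (m - s.+1)) else [::])
  end.

Definition okE k s m (p : seq nat) :=
  [&& sorted ltn p, all (fun x => (s < x) && (x <= s + k)) p & sumn p == m].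

Lemma memE k s m p : (p \in E k s m) = okE k s m p.
Proof.
elim: k s m p => [|k IH] s m p /=.
  rewrite /okE; case: p => [|x p] /=.
    by case: m.
  have -> : (s < x) && (x <= s + 0) = false by lia.
  by case: (m == 0); rewrite ?andbF.
rewrite mem_cat IH.
case: p => [|x p].
  rewrite /okE /=; case: ifP => _ /=; last by rewrite orbF.
  suff -> : ([::] \in [seq s.+1 :: i | i <- E k s.+1 (m - s.+1)]) = false by rewrite orbF.
  by apply/mapP => -[q _].
have -> : (x :: p \in (if s.+1 <= m then [seq s.+1 :: i | i <- E k s.+1 (m - s.+1)] else [::]))
   = [&& s.+1 <= m, x == s.+1 & p \in E k s.+1 (m - s.+1)].
  case: ifP => _ //=; apply/mapP/idP.
    by case=> q qin [-> ->]; rewrite eqxx qin.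
  by case/andP => /eqP -> pin; exists p.
rewrite IH /okE /= (path_sortedE ltn_trans).
apply/idP/idP.
  case/orP.
    case/and3P => /andP [a1 a2] /andP [/andP [h1 h2] a3] e.
    rewrite a1 a2 /= e andbT; apply/andP; split; first by move: h1 h2; clear; lia.
    apply/allP => y yin; move/allP: a3 => /(_ y yin); lia.
  case/and3P => sm /eqP xe /and3P [a2 a3 /eqP e].
  subst x; rewrite a2 /= andbT; repeat (apply/andP; split).
  all: try (apply/allP => y yin; move/allP: a3 => /(_ y yin) /=; lia).
  all: try lia.
case/and3P => /andP [a1 a2] /andP [h a3] /eqP e.
have [xe|xne] := eqVneq x s.+1.
  subst x; apply/orP; right; rewrite a2 /=; repeat (apply/andP; split).
  all: try (apply/allP => y yin; move/allP: a3 => /(_ y yin); move/allP: a1 => /(_ y yin) /=; lia).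
  all: try lia.
apply/orP; left; rewrite a1 a2 /=; repeat (apply/andP; split).
all: try (apply/allP => y yin; move/allP: a3 => /(_ y yin); move/allP: a1 => /(_ y yin) /=; lia).
all: try lia.
Qed.

Lemma le_sumn (p : seq nat) x : x \in p -> x <= sumn p.
Proof.
elim: p => [|a p IH] //=; rewrite inE => /orP [/eqP ->|/IH]; lia.
Qed.

Lemma uniqE k s m : uniq (E k s m).
Proof.
elim: k s m => [|k IH] s m /=; first by case: (m == 0).
rewrite cat_uniq IH /=; case: ifP => _ /=; last by [].
rewrite map_inj_uniq ?IH ?andbT; last by move=> p q [].
apply/hasPn => p /mapP [q _ ->]; rewrite memE /okE /= negb_and; apply/orP; right.
by rewrite negb_and ltnn.
Qed.

Lemma okE_k k1 k2 s m p : m <= s + k2 -> okE k1 s m p -> okE k2 s m p.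
Proof.
move=> h /and3P [a b /eqP e]; rewrite /okE a e eqxx andbT.
apply/allP => x xin; move/allP: b => /(_ x xin) /andP [b _]; rewrite b /=.
have := le_sumn _ _ xin; lia.
Qed.

Lemma sizeE k1 k2 s m : m <= s + k1 -> m <= s + k2 ->
  size (E k1 s m) = size (E k2 s m).
Proof.
move=> h1 h2; apply: perm_size; apply: uniq_perm; rewrite ?uniqE // => p.
rewrite !memE; apply/idP/idP; exact: okE_k.
Qed.

Definition Q s m := size (E m s m).

Lemma Qrec s m : Q s m = Q s.+1 m + (if s.+1 <= m then Q s.+1 (m - s.+1) else 0).
Proof.
rewrite /Q (@sizeE m m.+1 s m); [ | lia | lia].
rewrite [E m.+1 s m]/= size_cat; congr (_ + _).
case: ifP => // _; rewrite size_map; apply: sizeE; lia.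
Qed.

Lemma Q0 s m : 0 < m <= s -> Q s m = 0.
Proof.
move=> h; rewrite /Q; case E0: (E m s m) => [|p l] //.
have : p \in E m s m by rewrite E0 mem_head.
rewrite memE => /and3P [_ a /eqP e].
case: p E0 a e => [|x p] _ /=; first lia.
move=> /andP [/andP [h1 _] _] e; lia.
Qed.

Lemma uniq_blocks (ss : seq nat) (F : nat -> seq (seq nat)) (key : seq nat -> nat) :
  uniq ss -> (forall x, uniq (F x)) -> (forall x t, t \in F x -> key t = x) ->
  uniq (flatten (map F ss)).
Proof.
move=> + UF KF; elim: ss => //= x ss IH /andP [nx uss].
rewrite cat_uniq IH // UF andbT /=; apply/hasPn => t /flatten_mapP [y yin tin].
apply/negP => tin'; move: nx; rewrite -(KF _ _ tin') (KF _ _ tin) yin.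
by [].
Qed.

Definition blk n s := map (fun p => rev [:: s, s, s & p]) (E (n - 3 * s) s (n - 3 * s)).
Definition LD n := flatten (map (blk n) (filter (fun s => 3 * s <= n) (iota 0 n.+1))).

Lemma uniq_LD n : uniq (LD n).
Proof.
apply: (@uniq_blocks _ _ (last 0)).
- exact/filter_uniq/iota_uniq.
- move=> s; rewrite /blk map_inj_uniq ?uniqE // => p q /(can_inj revK) [].
  by [].
- by move=> s t /mapP [p _ ->]; rewrite rev_cons last_rcons.
Qed.

Lemma size_LD n : size (LD n) = sumn (map (fun s => Q s (n - 3 * s)) (filter (fun s => 3 * s <= n) (iota 0 n.+1))).
Proof.
rewrite /LD size_flatten /shape -map_comp; congr sumn; apply: eq_map => s /=.
by rewrite /blk size_map.
Qed.

Lemma filter_notC (s : nat) u : filter (predC (predC1 s)) u = nseq (count_mem s u) s.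
Proof. elim: u => //= a u IH; rewrite eq_sym; case: eqP => [e|_] /=; rewrite IH ?e //. Qed.

Lemma mem_LD n t : (t \in LD n) = D3_partition n t.
Proof.
apply/idP/idP.
  move=> /flatten_mapP [s]; rewrite mem_filter mem_iota => /andP [h3 _] /mapP [p].
  rewrite memE => /and3P [so al /eqP su] ->.
  move: so; rewrite ltn_sorted_uniq_leq => /andP [up sp].
  have sn : s \notin p.
    apply/negP => /(allP al) /= h; lia.
  have sl : sorted leq [:: s, s, s & p].
    by rewrite /= leqnn (path_sortedE leq_trans) sp andbT; apply/allP => x /(allP al) /=; lia.
  rewrite /D3_partition /is_partition rev_sorted sl sumn_rev /= su.
  rewrite rev_cons last_rcons -rev_cons -size_eq0 size_rev /= count_rev all_rev /=.
  rewrite eqxx (count_memPn sn) /=.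
  apply/andP; split; first (apply/eqP; lia).
  apply/allP => x xp; rewrite count_rev /= (count_uniq_mem _ up) xp.
  have -> : (s == x) = false by apply/negP => /eqP ex; move: sn; rewrite ex xp.
  by rewrite orbT.
case/and4P => /andP [st /eqP su] tn /eqP c3 al.
case/lastP: t tn st su c3 al => [|t' s] // _.
rewrite last_rcons.
have -> : rcons t' s = rev (s :: rev t') by rewrite rev_cons revK.
rewrite rev_sorted sumn_rev count_rev all_rev.
move: (rev t') => v st su c3 al.
set u := s :: v in st su c3 al *.
have hmin : all (leq s) u.
  by rewrite /= leqnn /=; apply: (order_path_min leq_trans); exact: st.
set p := filter (predC1 s) u.
have pu : {subset p <= u} by move=> x; rewrite mem_filter => /andP [].
have perm1 : perm_eq [:: s, s, s & p] u.
  have := perm_filterC (predC1 s) u; rewrite filter_notC c3 => h.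
  have h2 : perm_eq (p ++ nseq 3 s) u by rewrite h perm_refl.
  apply: perm_trans h2; by rewrite perm_sym perm_catC.
have sp : sorted leq p by apply: sorted_filter => //; exact: leq_trans.
have sl : sorted leq [:: s, s, s & p].
  rewrite /= leqnn (path_sortedE leq_trans) sp andbT.
  by apply/allP => x /pu /(allP hmin).
have ueq : u = [:: s, s, s & p].
  apply: (@path.sorted_eq _ leq leq_trans anti_leq) => //; by rewrite perm_sym.
have sup : 3 * s + sumn p = n by rewrite -su ueq /=; lia.
apply/flatten_mapP; exists s.
  rewrite mem_filter mem_iota; apply/andP; split; lia.
apply/mapP; exists p; last by rewrite -ueq.
rewrite memE /okE ltn_sorted_uniq_leq sp andbT.
have up : uniq p.
  apply: count_mem_uniq => x.
  case: (boolP (x \in p)) => xp; last exact/count_memPn.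
  have xs1 : (x == s) = false by move: xp; rewrite mem_filter => /andP [/negbTE].
  have xs2 : (s == x) = false by rewrite eq_sym.
  have := allP al x (pu x xp); rewrite count_rev xs1 ueq /= xs2 /=.
  move/eqP; lia.
rewrite up /=; apply/andP; split; last (apply/eqP; lia).
apply/allP => x xp; have := allP hmin x (pu x xp); have := le_sumn _ _ xp.
move: xp; rewrite mem_filter => /andP [xs _] /=.
move: xs => /eqP; lia.
Qed.

Lemma A_cardQ m : A_card m (Q 0 m).
Proof.
exists (map rev (E m 0 m)); split.
- by rewrite map_inj_uniq ?uniqE //; exact: (can_inj revK).
- move=> t; rewrite -{1}(revK t) (mem_map (can_inj revK)) memE /okE.
  rewrite /distinct_partition /is_partition ltn_sorted_uniq_leq rev_uniq sumn_rev all_rev.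
  have -> : sorted leq (rev t) = sorted geq t by rewrite rev_sorted.
  apply/idP/idP.
    case/and3P => /andP [u so] a /eqP e; rewrite so u e eqxx /= andbT.
    by apply/allP => x /(allP a) /andP [].
  case/and3P => /andP [so /eqP e] a u; rewrite so u e eqxx /= andbT.
  apply/allP => x xt; rewrite (allP a x xt) /=; have := le_sumn _ _ xt; lia.
- by rewrite size_map.
Qed.

Section IntPart.
Import GRing.Theory.
Local Open Scope ring_scope.

Definition Qz s (z : int) : int := match z with Posz m => (Q s m)%:Z | Negz _ => 0 end.

Lemma QzN s z : z < 0 -> Qz s z = 0.
Proof. by case: z. Qed.

Lemma QzP s z (m : nat) : z = m%:Z -> Qz s z = (Q s m)%:Z.
Proof. by move=> ->. Qed.

Lemma Qzrec s z : Qz s z = Qz s.+1 z + Qz s.+1 (z - (s%:Z + 1)).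
Proof.
case: z => [m|m].
  rewrite /= Qrec PoszD; case: ifP => h.
    by rewrite (@QzP _ _ (m - s.+1)%N) //; lia.
  by rewrite QzN ?addr0 //; lia.
by rewrite !QzN ?addr0 //; lia.
Qed.

Definition X (f : int -> int) (S n : int) :=
  f n - f (n - 1) - f (n - 2) + f (n - 3) - f (n - 1 - S) + f (n - 3 - S)
  + f (n - 2 - 2 * S) + f (n - 3 * S).

Lemma key (h g : int -> int) (n S : int) :
  (forall z, h z = g z + g (z - (S + 1))) ->
  X h S n - X g (S + 1) n = h (n - 3 * S).
Proof.
move=> H; rewrite /X !H.
have e1 : n - 2 - (S + 1) = n - 3 - S by ring.
have e2 : n - (S + 1) = n - 1 - S by ring.
have e3 : n - 1 - S - (S + 1) = n - 2 - 2 * S by ring.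
have e4 : n - 3 - S - (S + 1) = n - 2 - 2 * (S + 1) by ring.
have e5 : n - 2 - 2 * S - (S + 1) = n - 3 * (S + 1) by ring.
rewrite e3 e4 e5 e1 e2; ring.
Qed.

Lemma tele (n : nat) N :
  (sumn (map (fun s => Q s (n - 3 * s)) (filter (fun s => 3 * s <= n)%N (iota 0 N))))%:Z
  = X (Qz 0) (0%N)%:Z n%:Z - X (Qz N) N%:Z n%:Z.
Proof.
elim: N => [|N IH]; first by rewrite /= subrr.
rewrite -[N.+1]addn1 iotaD filter_cat map_cat sumn_cat PoszD IH /= add0n.
have K := @key (Qz N) (Qz N.+1) n%:Z N%:Z (Qzrec N).
rewrite addn1.
have -> : (N.+1)%:Z = N%:Z + 1 by rewrite -addn1 PoszD.
have -> : ((sumn [seq Q s (n - 3 * s) | s <- if (3 * N <= n)%N then [:: N] else [::]])%:Z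
   = Qz N (n%:Z - 3 * N%:Z)).
  case: ifP => h /=.
    by rewrite addn0 (@QzP _ _ (n - 3 * N)%N) //; lia.
  by rewrite QzN //; lia.
rewrite -K; ring.
Qed.

End IntPart.

Lemma Qz0' s (z : int) : (0 < z)%R -> (z <= s%:Z)%R -> Qz s z = 0%R.
Proof.
case: z => [m|m] //= h1 h2; rewrite Q0 //; lia.
Qed.

Theorem corollary13 (n : nat) (hn : 4 <= n) :
  exists a0 a1 a3 d : nat,
    [/\ A_card n a0, A_card (n - 1) a1, A_card (n - 3) a3, D3_card n d
      & (d%:Z = 2 * a3%:Z - 2 * a1%:Z + 2 * a0%:Z)%R].
Proof.
exists (Q 0 n), (Q 0 (n - 1)), (Q 0 (n - 3)), (size (LD n)); split.
- exact: A_cardQ.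
- exact: A_cardQ.
- exact: A_cardQ.
- by exists (LD n); split; [exact: uniq_LD | exact: mem_LD | ].
rewrite size_LD tele.
have Z : forall z : int, (z < (n.+1)%:Z)%R -> z != 0%R -> Qz n.+1 z = 0%R.
  move=> z h1 h2; have [h3|h3] : (z < 0 \/ 0 < z)%R by lia.
    exact: QzN.
  apply: Qz0'; lia.
rewrite /X !Z; try lia.
have -> : Posz 0 = 0%R by [].
rewrite !GRing.mulr0 !GRing.subr0.
rewrite (@QzP 0 (Posz n - 1)%R (n - 1)%N); last lia.
rewrite (@QzP 0 (Posz n - 2)%R (n - 2)%N); last lia.
rewrite (@QzP 0 (Posz n - 3)%R (n - 3)%N); last lia.
rewrite /=; ring.
Qed.
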